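(* Consider the first-order system, for the state $\mathbb W=(\alpha_1,\alpha_1\rho_1,\alpha_2\rho_2,\alpha_1\rho_1u_1,\alpha_2\rho_2u_2,\alpha_1\rho_1s_1,\alpha_2\rho_2s_2,\alpha_1\rho_1\mathcal T_1,\alpha_2\rho_2\mathcal T_2)\in\Omega_{\mathbb W}$, $$\partial_t\mathbb W+\partial_x\mathbf g(\mathbb W)+\mathbf d(\mathbb W)\partial_x\mathbb W=0,$$ with $\mathbf g(\mathbb W)=(0,\alpha_1\rho_1u_1,\alpha_2\rho_2u_2,\alpha_1\rho_1u_1^2+\alpha_1\pi_1,\alpha_2\rho_2u_2^2+\alpha_2\pi_2,\alpha_1\rho_1s_1u_1,\alpha_2\rho_2s_2u_2,\alpha_1\rho_1\mathcal T_1u_1,\alpha_2\rho_2\mathcal T_2u_2)^T$ and $\mathbf d(\mathbb W)\partial_x\mathbb W=(u_2,0,0,-\pi_1,\pi_1,0,0,0,0)^T\partial_x\alpha_1$. For every $\mathbb W\in\Omega_{\mathbb W}$, the matrix $\mathbf g'(\mathbb W)+\mathbf d(\mathbb W)$ has the real eigenvalues $u_2$ (multiplicity 3), $u_1$ (multiplicity 2), $u_1\pm a_1\tau_1$, $u_2\pm a_2\tau_2$; all associated characteristic fields are linearly degenerate; and the right eigenvectors are linearly independent (span $\mathbb R^9$) if and only if $\alpha_1\neq0$, $\alpha_2\neq0$ and $|u_1-u_2|\neq a_1\tau_1$. Moreover every $C^1$ solution with values in $\Omega_{\mathbb W}$ satisfies, for $k=1,2$, $$\partial_t(\alpha_k\rho_k\mathcal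 E_k)+\partial_x(\alpha_k\rho_k\mathcal E_ku_k+\alpha_k\pi_ku_k)-u_2\pi_1\partial_x\alpha_k=0,$$ and hence $\partial_t\big(\sum_{k=1}^2\alpha_k\rho_k\mathcal E_k\big)+\partial_x\big(\sum_{k=1}^2(\alpha_k\rho_k\mathcal E_ku_k+\alpha_k\pi_ku_k)\big)=0$.
   Context: $\alpha_2=1-\alpha_1$, $\rho_k=(\alpha_k\rho_k)/\alpha_k$, $\tau_k=1/\rho_k$, $u_k,s_k,\mathcal T_k$ obtained by dividing the corresponding components by $\alpha_k\rho_k$. $\Omega_{\mathbb W}=\{\mathbb W\in\mathbb R^9:\ 0<\alpha_1<1,\ \alpha_k\rho_k>0,\ \alpha_k\rho_k\mathcal T_k>0,\ k=1,2\}$. $a_1,a_2>0$ are constants. For phase $k$, $e_k(\tau,s)$ is a $C^1$ internal energy and $\mathcal P_k(\tau,s)=-\partial_\tau e_k(\tau,s)$ (assumed $C^1$); $\pi_k=\mathcal P_k(\mathcal T_k,s_k)+a_k^2(\mathcal T_k-\tau_k)$ and $\mathcal E_k=\frac{u_k^2}{2}+e_k(\mathcal T_k,s_k)+\frac{\pi_k^2-\mathcal P_k(\mathcal T_k,s_k)^2}{2a_k^2}$. *)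

(* Defs.v *)
From Stdlib Require Import Reals.
Open Scope R_scope.

Fixpoint sumR (n : nat) (f : nat -> R) : R :=
  match n with O => 0 | S n' => sumR n' f + f n' end.

Definition minor (j : nat) (M : nat -> nat -> R) : nat -> nat -> R :=
  fun i k => M (S i) (if Nat.ltb k j then k else S k).

Fixpoint det (n : nat) (M : nat -> nat -> R) : R :=
  match n with
  | O => 1
  | S n' => sumR n (fun j => (-1) ^ j * M O j * det n' (minor j M))
  end.

(** State W = (a1, a1r1, a2r2, a1r1u1, a2r2u2, a1r1s1, a2r2s2, a1r1T1, a2r2T2),
    indices 0..8.  Phase index k in {1,2}. *)
Definition alpha (k : nat) (W : nat -> R) : R :=
  if Nat.eqb k 1 then W 0%nat else 1 - W 0%nat.
Definition arho (k : nat) (W : nat -> R) : R := W k.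
Definition rho (k : nat) (W : nat -> R) : R := arho k W / alpha k W.
Definition tau (k : nat) (W : nat -> R) : R := / rho k W.
Definition u (k : nat) (W : nat -> R) : R := W (k + 2)%nat / arho k W.
Definition s (k : nat) (W : nat -> R) : R := W (k + 4)%nat / arho k W.
Definition TT (k : nat) (W : nat -> R) : R := W (k + 6)%nat / arho k W.

Definition pi (P : R -> R -> R) (a : R) (k : nat) (W : nat -> R) : R :=
  P (TT k W) (s k W) + a ^ 2 * (TT k W - tau k W).

Definition Energy (e P : R -> R -> R) (a : R) (k : nat) (W : nat -> R) : R :=
  (u k W) ^ 2 / 2 + e (TT k W) (s k W)
  + ((pi P a k W) ^ 2 - (P (TT k W) (s k W)) ^ 2) / (2 * a ^ 2).

Definition OmegaW (W : nat -> R) : Prop :=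
  0 < W 0%nat < 1 /\ 0 < W 1%nat /\ 0 < W 2%nat /\ 0 < W 7%nat /\ 0 < W 8%nat.

Definition gflux (P1 P2 : R -> R -> R) (a1 a2 : R) (W : nat -> R) (i : nat) : R :=
  match i with
  | 1%nat => arho 1 W * u 1 W
  | 2%nat => arho 2 W * u 2 W
  | 3%nat => arho 1 W * (u 1 W) ^ 2 + alpha 1 W * pi P1 a1 1 W
  | 4%nat => arho 2 W * (u 2 W) ^ 2 + alpha 2 W * pi P2 a2 2 W
  | 5%nat => arho 1 W * s 1 W * u 1 W
  | 6%nat => arho 2 W * s 2 W * u 2 W
  | 7%nat => arho 1 W * TT 1 W * u 1 W
  | 8%nat => arho 2 W * TT 2 W * u 2 W
  | _ => 0
  end.

Definition dmat (P1 : R -> R -> R) (a1 : R) (W : nat -> R) (i j : nat) : R :=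
  if Nat.eqb j 0 then
    match i with
    | 0%nat => u 2 W
    | 3%nat => - pi P1 a1 1 W
    | 4%nat => pi P1 a1 1 W
    | _ => 0
    end
  else 0.

Definition update (W : nat -> R) (j : nat) (h : R) : nat -> R :=
  fun k => if Nat.eqb k j then W k + h else W k.

Definition is_jacobian (G : (nat -> R) -> nat -> R) (W : nat -> R)
  (J : nat -> nat -> R) : Prop :=
  forall i j, (i < 9)%nat -> (j < 9)%nat ->
    derivable_pt_lim (fun h => G (update W j h) i) 0 (J i j).

Definition matvec (A : nat -> nat -> R) (r : nat -> R) (i : nat) : R :=
  sumR 9 (fun j => A i j * r j).

Definition eigenbasis (A : nat -> nat -> R) : Prop :=
  exists (r : nat -> nat -> R) (mu : nat -> R),
    (forall k i, (k < 9)%nat -> (i < 9)%nat -> matvec A (r k) i = mu k * r k i) /\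
    (forall c : nat -> R,
        (forall i, (i < 9)%nat -> sumR 9 (fun k => c k * r k i) = 0) ->
        forall k, (k < 9)%nat -> c k = 0).

Definition lamfun (a1 a2 : R) (n : nat) (W : nat -> R) : R :=
  match n with
  | 0%nat => u 2 W
  | 1%nat => u 1 W
  | 2%nat => u 1 W + a1 * tau 1 W
  | 3%nat => u 1 W - a1 * tau 1 W
  | 4%nat => u 2 W + a2 * tau 2 W
  | _ => u 2 W - a2 * tau 2 W
  end.

Definition cont2_at (f : R -> R -> R) (x y : R) : Prop :=
  forall eps, 0 < eps -> exists delta, 0 < delta /\
    forall x' y', Rabs (x' - x) < delta -> Rabs (y' - y) < delta ->
      Rabs (f x' y' - f x y) < eps.

Definition open2 (U : R -> R -> Prop) : Prop :=
  forall x y, U x y -> exists delta, 0 < delta /\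
    forall x' y', Rabs (x' - x) < delta -> Rabs (y' - y) < delta -> U x' y'.

Definition C1_on (D : R -> R -> Prop) (f : R -> R -> R) : Prop :=
  exists f1 f2 : R -> R -> R,
    forall x y, D x y ->
      derivable_pt_lim (fun z => f z y) x (f1 x y) /\
      derivable_pt_lim (fun z => f x z) y (f2 x y) /\
      cont2_at f1 x y /\ cont2_at f2 x y.

Definition tau_pos : R -> R -> Prop := fun t _ => 0 < t.

Definition eta (e P : R -> R -> R) (a : R) (k : nat) (W : nat -> R) : R :=
  alpha k W * rho k W * Energy e P a k W.
Definition eflux (e P : R -> R -> R) (a : R) (k : nat) (W : nat -> R) : R :=
  alpha k W * rho k W * Energy e P a k W * u k W + alpha k W * pi P a k W * u k W.

Definition dalpha (k : nat) (w : R) : R := if Nat.eqb k 1 then w else - w.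

(* Main.v *)
Require Import Defs.
From Stdlib Require Import Reals Lra Lia.
From Coquelicot Require Import Coquelicot.
Open Scope R_scope.
Lemma D_eq f x l l' : derivable_pt_lim f x l -> l = l' -> derivable_pt_lim f x l'.
Proof. intros H ->; exact H. Qed.
Lemma D_const (c x : R) : derivable_pt_lim (fun _ => c) x 0.
Proof. apply derivable_pt_lim_const. Qed.
Lemma D_id x : derivable_pt_lim (fun h => h) x 1.
Proof. apply derivable_pt_lim_id. Qed.
Lemma D_plus f g x a b : derivable_pt_lim f x a -> derivable_pt_lim g x b ->
  derivable_pt_lim (fun h => f h + g h) x (a + b).
Proof. intros; apply (derivable_pt_lim_plus f g); auto. Qed.
Lemma D_minus f g x a b : derivable_pt_lim f x a -> derivable_pt_lim g x b ->
  derivable_pt_lim (fun h => f h - g h) x (a - b).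
Proof. intros; apply (derivable_pt_lim_minus f g); auto. Qed.
Lemma D_opp f x a : derivable_pt_lim f x a ->
  derivable_pt_lim (fun h => - f h) x (- a).
Proof. intros; apply (derivable_pt_lim_opp f); auto. Qed.
Lemma D_mult f g x a b : derivable_pt_lim f x a -> derivable_pt_lim g x b ->
  derivable_pt_lim (fun h => f h * g h) x (a * g x + f x * b).
Proof. intros. eapply D_eq. apply (derivable_pt_lim_mult f g); eauto. ring. Qed.
Lemma D_div f g x a b : g x <> 0 -> derivable_pt_lim f x a -> derivable_pt_lim g x b ->
  derivable_pt_lim (fun h => f h / g h) x ((a * g x - b * f x) / (g x ^ 2)).
Proof. intros. eapply D_eq. apply (derivable_pt_lim_div f g); eauto. unfold Rsqr; field; auto. Qed.
Lemma D_pow f x a n : derivable_pt_lim f x a ->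
  derivable_pt_lim (fun h => f h ^ n) x (INR n * f x ^ Init.Nat.pred n * a).
Proof. intros. apply (derivable_pt_lim_comp f (fun y => y ^ n)); auto.
  apply derivable_pt_lim_pow. Qed.

Ltac dstep :=
  first [ apply D_const | apply D_id | eassumption
        | apply D_div | apply D_minus | apply D_plus | apply D_opp
        | apply D_pow | apply D_mult
        | match goal with H : forall (g k : R -> R) (x g' k' : R), _ |- _ => eapply H end ].

Lemma mvt_bound (f f' : R -> R) (x u K : R) :
  (forall c, Rmin x u <= c <= Rmax x u -> derivable_pt_lim f c (f' c)) ->
  (forall c, Rmin x u <= c <= Rmax x u -> Rabs (f' c) <= K) ->
  Rabs (f u - f x) <= K * Rabs (u - x).
Proof.
  intros Hd Hb.
  destruct (Rtotal_order x u) as [Hlt|[Heq|Hgt]].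
  - destruct (MVT_cor2 f f' x u Hlt) as [c [Hc1 Hc2]].
    { intros c Hc; apply Hd; rewrite Rmin_left, Rmax_right; lra. }
    rewrite Hc1, Rabs_mult. apply Rmult_le_compat_r. apply Rabs_pos.
    apply Hb. rewrite Rmin_left, Rmax_right; lra.
  - subst. replace (f u - f u) with 0 by ring. replace (u - u) with 0 by ring.
    rewrite Rabs_R0. lra.
  - destruct (MVT_cor2 f f' u x Hgt) as [c [Hc1 Hc2]].
    { intros c Hc; apply Hd; rewrite Rmin_right, Rmax_left; lra. }
    replace (f u - f x) with (- (f x - f u)) by ring.
    replace (u - x) with (- (x - u)) by ring.
    rewrite !Rabs_Ropp, Hc1, Rabs_mult. apply Rmult_le_compat_r. apply Rabs_pos.
    apply Hb. rewrite Rmin_right, Rmax_left; lra.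
Qed.

Lemma diff2 (F F1 F2 : R -> R -> R) x y (d : R) : 0 < d ->
 (forall u v, Rabs (u-x) < d -> Rabs (v-y) < d -> derivable_pt_lim (fun z => F z v) u (F1 u v)) ->
 derivable_pt_lim (fun z => F x z) y (F2 x y) -> cont2_at F1 x y ->
 differentiable_pt_lim F x y (F1 x y) (F2 x y).
Proof.
  intros Hd HF1 HF2 HC eps.
  assert (He2 : 0 < eps / 2) by (destruct eps; simpl; lra).
  destruct (HC _ He2) as [d1 [Hd1 Hc1]].
  destruct (HF2 _ He2) as [d2 Hc2].
  assert (Hdd : 0 < Rmin d (Rmin d1 d2)).
  { apply Rmin_pos; [lra|apply Rmin_pos; [lra| destruct d2; simpl; lra]]. }
  exists (mkposreal _ Hdd). simpl. intros u v Hu Hv.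
  assert (Hu1 : Rabs (u - x) < d) by (eapply Rlt_le_trans; [exact Hu| apply Rmin_l]).
  assert (Hv1 : Rabs (v - y) < d) by (eapply Rlt_le_trans; [exact Hv| apply Rmin_l]).
  assert (Hu2 : Rabs (u - x) < d1) by (eapply Rlt_le_trans; [exact Hu| eapply Rle_trans; [apply Rmin_r| apply Rmin_l]]).
  assert (Hv2 : Rabs (v - y) < d1) by (eapply Rlt_le_trans; [exact Hv| eapply Rle_trans; [apply Rmin_r| apply Rmin_l]]).
  assert (Hv3 : Rabs (v - y) < d2) by (eapply Rlt_le_trans; [exact Hv| eapply Rle_trans; [apply Rmin_r| apply Rmin_r]]).
  assert (HA : Rabs ((F u v - F1 x y * u) - (F x v - F1 x y * x)) <= eps / 2 * Rabs (u - x)).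
  { apply (mvt_bound (fun z => F z v - F1 x y * z) (fun z => F1 z v - F1 x y)).
    - intros c Hc. apply D_eq with (F1 c v - F1 x y * 1).
      apply derivable_pt_lim_minus. apply HF1.
      { unfold Rmin, Rmax in Hc; destruct (Rle_dec x u); apply Rabs_def1; apply Rabs_def2 in Hu1; lra. }
      exact Hv1.
      apply derivable_pt_lim_scal. apply derivable_pt_lim_id. ring.
    - intros c Hc. left. apply Hc1; auto.
      unfold Rmin, Rmax in Hc; destruct (Rle_dec x u); apply Rabs_def1; apply Rabs_def2 in Hu2; lra. }
  assert (HB : Rabs (F x v - F x y - F2 x y * (v - y)) <= eps / 2 * Rabs (v - y)).
  { destruct (Req_dec v y) as [E|E].
    - subst. replace (F x y - F x y - F2 x y * (y - y)) with 0 by ring.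
      rewrite Rabs_R0, Rminus_diag, Rabs_R0. lra.
    - assert (Hh : v - y <> 0) by lra.
      specialize (Hc2 (v - y) Hh Hv3). replace (y + (v - y)) with v in Hc2 by ring.
      replace (F x v - F x y - F2 x y * (v - y)) with
        (((F x v - F x y) / (v - y) - F2 x y) * (v - y)) by (field; auto).
      rewrite Rabs_mult. apply Rmult_le_compat_r. apply Rabs_pos. lra. }
  replace (F u v - F x y - (F1 x y * (u - x) + F2 x y * (v - y))) with
     (((F u v - F1 x y * u) - (F x v - F1 x y * x)) + (F x v - F x y - F2 x y * (v - y))) by ring.
  eapply Rle_trans. apply Rabs_triang.
  assert (Rabs (u - x) <= Rmax (Rabs (u - x)) (Rabs (v - y))) by apply Rmax_l.
  assert (Rabs (v - y) <= Rmax (Rabs (u - x)) (Rabs (v - y))) by apply Rmax_r.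
  assert (0 < eps) by (destruct eps; simpl; auto).
  nra.
Qed.

Lemma chain_tau (F F1 F2 : R -> R -> R)
  (H : forall x y, tau_pos x y ->
      derivable_pt_lim (fun z => F z y) x (F1 x y) /\
      derivable_pt_lim (fun z => F x z) y (F2 x y) /\
      cont2_at F1 x y /\ cont2_at F2 x y) :
  forall (g k : R -> R) (x g' k' : R), 0 < g x ->
    derivable_pt_lim g x g' -> derivable_pt_lim k x k' ->
    derivable_pt_lim (fun h => F (g h) (k h)) x (F1 (g x) (k x) * g' + F2 (g x) (k x) * k').
Proof.
  intros g k x g' k' Hg Dg Dk.
  apply (derivable_pt_lim_comp_2d F g k x); auto.
  apply diff2 with (d := g x); auto.
  - intros u v Hu Hv. apply H. unfold tau_pos. apply Rabs_def2 in Hu. lra.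
  - apply H. exact Hg.
  - apply H. exact Hg.
Qed.

Lemma D_ext f g x l : (forall h, f h = g h) -> derivable_pt_lim f x l -> derivable_pt_lim g x l.
Proof. intros E H eps He. destruct (H eps He) as [d Hd]. exists d. intros h Hh Hh2.
  rewrite <- !E. apply Hd; auto. Qed.

Lemma D_inv f x a : f x <> 0 -> derivable_pt_lim f x a ->
  derivable_pt_lim (fun h => / f h) x (- a / (f x ^ 2)).
Proof. intros. apply (D_ext (fun h => 1 / f h)). intros; unfold Rdiv; ring.
  eapply D_eq. apply (D_div (fun _ => 1) f x 0 a); auto. apply D_const.
  field; auto. Qed.

Ltac dstep ::=
  first [ apply D_const | apply D_id | eassumption
        | apply D_div | apply D_inv | apply D_minus | apply D_plus | apply D_opp
        | apply D_pow | apply D_mult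
        | match goal with H : forall (g k : R -> R) (x g' k' : R), _ |- _ => eapply H end ].


Definition Jx (a1 a2 P1v P2v p1t p1s p2t p2s : R) (W : nat -> R) (i j : nat) : R :=
  let al := W 0%nat in let m1 := W 1%nat in let m2 := W 2%nat in
  let u1 := W 3%nat / m1 in let u2 := W 4%nat / m2 in
  let s1 := W 5%nat / m1 in let s2 := W 6%nat / m2 in
  let T1 := W 7%nat / m1 in let T2 := W 8%nat / m2 in
  let t1 := al / m1 in let t2 := (1 - al) / m2 in
  let pi1 := P1v + a1 ^ 2 * (T1 - t1) in let pi2 := P2v + a2 ^ 2 * (T2 - t2) in
  match i, j with
  | 1%nat, 3%nat => 1 | 2%nat, 4%nat => 1
  | 3%nat, 0%nat => pi1 - al * a1 ^ 2 / m1
  | 4%nat, 0%nat => - pi2 + (1 - al) * a2 ^ 2 / m2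
  | 3%nat, 1%nat => - u1 ^ 2 - al * (p1t * T1 + p1s * s1 + a1 ^ 2 * (T1 - t1)) / m1
  | 3%nat, 3%nat => 2 * u1
  | 3%nat, 5%nat => al * p1s / m1
  | 3%nat, 7%nat => al * (p1t + a1 ^ 2) / m1
  | 4%nat, 2%nat => - u2 ^ 2 - (1 - al) * (p2t * T2 + p2s * s2 + a2 ^ 2 * (T2 - t2)) / m2
  | 4%nat, 4%nat => 2 * u2
  | 4%nat, 6%nat => (1 - al) * p2s / m2
  | 4%nat, 8%nat => (1 - al) * (p2t + a2 ^ 2) / m2
  | 5%nat, 1%nat => - s1 * u1 | 5%nat, 3%nat => s1 | 5%nat, 5%nat => u1
  | 6%nat, 2%nat => - s2 * u2 | 6%nat, 4%nat => s2 | 6%nat, 6%nat => u2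
  | 7%nat, 1%nat => - T1 * u1 | 7%nat, 3%nat => T1 | 7%nat, 7%nat => u1
  | 8%nat, 2%nat => - T2 * u2 | 8%nat, 4%nat => T2 | 8%nat, 8%nat => u2
  | _, _ => 0
  end.

Ltac pos := repeat (apply Rdiv_lt_0_compat || apply Rmult_lt_0_compat || apply Rinv_0_lt_compat); lra.

Definition C1data (P Pt Ps : R -> R -> R) := forall x y, tau_pos x y ->
      derivable_pt_lim (fun z => P z y) x (Pt x y) /\
      derivable_pt_lim (fun z => P x z) y (Ps x y) /\
      cont2_at Pt x y /\ cont2_at Ps x y.

Lemma Jac_eq P1 P2 P1t P1s P2t P2s a1 a2 W J :
  C1data P1 P1t P1s -> C1data P2 P2t P2s -> OmegaW W ->
  is_jacobian (gflux P1 P2 a1 a2) W J -> forall i j, (i < 9)%nat -> (j < 9)%nat ->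
  J i j = Jx a1 a2 (P1 (TT 1 W) (s 1 W)) (P2 (TT 2 W) (s 2 W))
     (P1t (TT 1 W) (s 1 W)) (P1s (TT 1 W) (s 1 W)) (P2t (TT 2 W) (s 2 W)) (P2s (TT 2 W) (s 2 W)) W i j.
Proof.
  intros HC1 HC2 HW HJ i j Hi Hj.
  pose proof (chain_tau _ _ _ HC1) as DP1; pose proof (chain_tau _ _ _ HC2) as DP2.
  apply (uniqueness_limite _ 0 _ _ (HJ i j Hi Hj)).
  destruct HW as [[H0 H0'] [H1 [H2 [H7 H8]]]].
  destruct i as [|[|[|[|[|[|[|[|[|i]]]]]]]]]; try lia;
  destruct j as [|[|[|[|[|[|[|[|[|j]]]]]]]]]; try lia.
  all: unfold gflux, Jx, pi, u, s, TT, tau, rho, arho, alpha, update; cbn [Nat.eqb Nat.add].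
  all: eapply D_eq; [repeat dstep | ].
  all: cbv beta; cbn [INR Init.Nat.pred]; rewrite ?Rplus_0_r.
  all: try (apply Rgt_not_eq; pos).
  all: try pos.
  all: try (field; repeat split; apply Rgt_not_eq; pos).
Qed.


Lemma det_S n M : det (S n) M = sumR (S n) (fun j => (-1) ^ j * M O j * det n (minor j M)).
Proof. reflexivity. Qed.

Definition Mpat (x c0 b30 b40 b31 b33 b35 b37 b42 b44 b46 b48 b51 b53 b55 b62 b64 b66 b71 b73 b77 b82 b84 b88 : R) (i j : nat) : R :=
  match i, j with
  | 0%nat, 0%nat => x - c0
  | 1%nat, 1%nat => x | 1%nat, 3%nat => -1
  | 2%nat, 2%nat => x | 2%nat, 4%nat => -1
  | 3%nat, 0%nat => - b30 | 3%nat, 1%nat => - b31 | 3%nat, 3%nat => x - b33 | 3%nat, 5%nat => - b35 | 3%nat, 7%nat => - b37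
  | 4%nat, 0%nat => - b40 | 4%nat, 2%nat => - b42 | 4%nat, 4%nat => x - b44 | 4%nat, 6%nat => - b46 | 4%nat, 8%nat => - b48
  | 5%nat, 1%nat => - b51 | 5%nat, 3%nat => - b53 | 5%nat, 5%nat => x - b55
  | 6%nat, 2%nat => - b62 | 6%nat, 4%nat => - b64 | 6%nat, 6%nat => x - b66
  | 7%nat, 1%nat => - b71 | 7%nat, 3%nat => - b73 | 7%nat, 7%nat => x - b77
  | 8%nat, 2%nat => - b82 | 8%nat, 4%nat => - b84 | 8%nat, 8%nat => x - b88
  | _, _ => 0
  end.

Definition B4 (x b1 b3 b5 b7 c1 c3 c5 d1 d3 d7 : R) (i j : nat) : R :=
  match i, j with
  | 0%nat, 0%nat => x | 0%nat, 1%nat => -1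
  | 1%nat, 0%nat => - b1 | 1%nat, 1%nat => x - b3 | 1%nat, 2%nat => - b5 | 1%nat, 3%nat => - b7
  | 2%nat, 0%nat => - c1 | 2%nat, 1%nat => - c3 | 2%nat, 2%nat => x - c5
  | 3%nat, 0%nat => - d1 | 3%nat, 1%nat => - d3 | 3%nat, 3%nat => x - d7
  | _, _ => 0
  end.

Ltac evm M := repeat match goal with |- context [minor ?a ?N ?i ?j] =>
   let v := eval cbv [M Mpat B4 minor Nat.ltb Nat.leb] in (minor a N i j) in change (minor a N i j) with v end.

Ltac lvl M k := rewrite ?(det_S k); cbn [sumR]; evm M;
  rewrite ?Rmult_0_r, ?Rmult_0_l, ?Rplus_0_l, ?Rplus_0_r.

Lemma det9 x c0 b30 b40 b31 b33 b35 b37 b42 b44 b46 b48 b51 b53 b55 b62 b64 b66 b71 b73 b77 b82 b84 b88 :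
  det 9 (Mpat x c0 b30 b40 b31 b33 b35 b37 b42 b44 b46 b48 b51 b53 b55 b62 b64 b66 b71 b73 b77 b82 b84 b88)
  = (x - c0) * det 4 (B4 x b31 b33 b35 b37 b51 b53 b55 b71 b73 b77)
             * det 4 (B4 x b42 b44 b46 b48 b62 b64 b66 b82 b84 b88).
Proof.
  set (M := Mpat x c0 b30 b40 b31 b33 b35 b37 b42 b44 b46 b48 b51 b53 b55 b62 b64 b66 b71 b73 b77 b82 b84 b88).
  rewrite (det_S 8); cbn [sumR]; change (M 0%nat 0%nat) with (x - c0);
  repeat match goal with |- context [M 0%nat ?j] => change (M 0%nat j) with 0 end;
  rewrite ?Rmult_0_r, ?Rmult_0_l, ?Rplus_0_l, ?Rplus_0_r.
  lvl M 7%nat. lvl M 6%nat. lvl M 5%nat. lvl M 4%nat. lvl M 3%nat.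
  lvl M 2%nat. lvl M 1%nat. lvl M 0%nat.
  cbv [det sumR B4 minor Nat.ltb Nat.leb]. ring.
Qed.


Lemma sumR_ext n f g : (forall i, (i < n)%nat -> f i = g i) -> sumR n f = sumR n g.
Proof. induction n; intros H; simpl; auto. rewrite IHn, H; auto. Qed.

Lemma det_ext n : forall M M', (forall i j, (i < n)%nat -> (j < n)%nat -> M i j = M' i j) ->
  det n M = det n M'.
Proof.
  induction n; intros M M' H; [reflexivity|]. rewrite !det_S.
  apply sumR_ext; intros j Hj. rewrite H by lia. f_equal.
  apply IHn. intros i k Hi Hk. unfold minor. apply H. lia.
  destruct (Nat.ltb k j); lia.
Qed.

Lemma block1 x a1 a2 P1v P2v p1t p1s p2t p2s W :
  0 < W 0%nat -> 0 < W 1%nat ->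
  let jx := Jx a1 a2 P1v P2v p1t p1s p2t p2s W in
  det 4 (B4 x (jx 3%nat 1%nat) (jx 3%nat 3%nat) (jx 3%nat 5%nat) (jx 3%nat 7%nat) (jx 5%nat 1%nat) (jx 5%nat 3%nat) (jx 5%nat 5%nat)
     (jx 7%nat 1%nat) (jx 7%nat 3%nat) (jx 7%nat 7%nat))
  = (x - u 1 W) ^ 2 * (x - (u 1 W + a1 * tau 1 W)) * (x - (u 1 W - a1 * tau 1 W)).
Proof.
  intros H0 H1 jx. unfold jx.
  cbv [det sumR minor B4 Jx Nat.ltb Nat.leb].
  unfold u, tau, rho, arho, alpha; cbn [Nat.eqb Nat.add].
  field. split; lra.
Qed.

Lemma block2 x a1 a2 P1v P2v p1t p1s p2t p2s W :
  W 0%nat < 1 -> 0 < W 2%nat ->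
  let jx := Jx a1 a2 P1v P2v p1t p1s p2t p2s W in
  det 4 (B4 x (jx 4%nat 2%nat) (jx 4%nat 4%nat) (jx 4%nat 6%nat) (jx 4%nat 8%nat) (jx 6%nat 2%nat) (jx 6%nat 4%nat) (jx 6%nat 6%nat)
     (jx 8%nat 2%nat) (jx 8%nat 4%nat) (jx 8%nat 8%nat))
  = (x - u 2 W) ^ 2 * (x - (u 2 W + a2 * tau 2 W)) * (x - (u 2 W - a2 * tau 2 W)).
Proof.
  intros H0 H1 jx. unfold jx.
  cbv [det sumR minor B4 Jx Nat.ltb Nat.leb].
  unfold u, tau, rho, arho, alpha; cbn [Nat.eqb Nat.add].
  field. split; lra.
Qed.

Lemma charpoly P1 a1 a2 P1v P2v p1t p1s p2t p2s W (x : R) (A : nat -> nat -> R) :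
  OmegaW W ->
  (forall i j, (i < 9)%nat -> (j < 9)%nat ->
      A i j = Jx a1 a2 P1v P2v p1t p1s p2t p2s W i j + dmat P1 a1 W i j) ->
  det 9 (fun i j => (if Nat.eqb i j then x else 0) - A i j) =
        (x - u 2 W) ^ 3 * (x - u 1 W) ^ 2
        * (x - (u 1 W + a1 * tau 1 W)) * (x - (u 1 W - a1 * tau 1 W))
        * (x - (u 2 W + a2 * tau 2 W)) * (x - (u 2 W - a2 * tau 2 W)).
Proof.
  intros HW HA.
  destruct HW as [[H0 H0'] [H1 [H2 [H7 H8]]]].
  set (jx := Jx a1 a2 P1v P2v p1t p1s p2t p2s W).
  rewrite (det_ext 9 _ (Mpat x (u 2 W) (jx 3%nat 0%nat + dmat P1 a1 W 3%nat 0%nat) (jx 4%nat 0%nat + dmat P1 a1 W 4%nat 0%nat)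
     (jx 3%nat 1%nat) (jx 3%nat 3%nat) (jx 3%nat 5%nat) (jx 3%nat 7%nat)
     (jx 4%nat 2%nat) (jx 4%nat 4%nat) (jx 4%nat 6%nat) (jx 4%nat 8%nat)
     (jx 5%nat 1%nat) (jx 5%nat 3%nat) (jx 5%nat 5%nat) (jx 6%nat 2%nat) (jx 6%nat 4%nat) (jx 6%nat 6%nat)
     (jx 7%nat 1%nat) (jx 7%nat 3%nat) (jx 7%nat 7%nat) (jx 8%nat 2%nat) (jx 8%nat 4%nat) (jx 8%nat 8%nat))).
  2:{ intros i j Hi Hj. rewrite HA by auto. unfold jx.
      destruct i as [|[|[|[|[|[|[|[|[|i]]]]]]]]]; try lia;
      destruct j as [|[|[|[|[|[|[|[|[|j]]]]]]]]]; try lia;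
      cbv [Jx dmat Mpat Nat.eqb]; ring. }
  rewrite det9. unfold jx. rewrite block1, block2 by lra. ring.
Qed.



Lemma LD P1 a1 a2 P2v p1t p1s p2t p2s W (A : nat -> nat -> R) :
  0 < a1 -> 0 < a2 -> OmegaW W ->
  (forall i j, (i < 9)%nat -> (j < 9)%nat ->
      A i j = Jx a1 a2 (P1 (TT 1 W) (s 1 W)) P2v p1t p1s p2t p2s W i j + dmat P1 a1 W i j) ->
  forall (n : nat) (r : nat -> R), (n < 6)%nat ->
        (forall i, (i < 9)%nat -> matvec A r i = lamfun a1 a2 n W * r i) ->
        derivable_pt_lim (fun h => lamfun a1 a2 n (fun i => W i + h * r i)) 0 0.
Proof.
  intros ha1 ha2 HW HA n r Hn Hr.
  destruct HW as [[H0 H0'] [H1 [H2 [H7 H8]]]].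
  assert (Hrow : forall i, (i < 9)%nat -> sumR 9 (fun j =>
     (Jx a1 a2 (P1 (TT 1 W) (s 1 W)) P2v p1t p1s p2t p2s W i j + dmat P1 a1 W i j) * r j)
       = lamfun a1 a2 n W * r i).
  { intros i Hi. rewrite <- Hr by auto. unfold matvec. apply sumR_ext. intros j Hj.
    rewrite HA; auto. }
  assert (E0 := Hrow 0%nat ltac:(lia)); assert (E1 := Hrow 1%nat ltac:(lia));
  assert (E2 := Hrow 2%nat ltac:(lia)); assert (E3 := Hrow 3%nat ltac:(lia));
  assert (E5 := Hrow 5%nat ltac:(lia)); assert (E7 := Hrow 7%nat ltac:(lia)).
  clear Hrow Hr HA.
  cbn [sumR] in E0, E1, E2, E3, E5, E7.
  cbv [Jx dmat Nat.eqb] in E0, E1, E2, E3, E5, E7.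
  destruct n as [|[|[|[|[|[|n]]]]]]; try lia; unfold lamfun in *.
  all: unfold pi, u, s, TT, tau, rho, arho, alpha in *; cbn [Nat.eqb Nat.add] in *.
  all: assert (Et1 : / (W 1%nat / W 0%nat) = W 0%nat * / W 1%nat) by (field; lra).
  all: assert (Et2 : / (W 2%nat / (1 - W 0%nat)) = (1 - W 0%nat) * / W 2%nat) by (field; lra).
  all: rewrite ?Et1, ?Et2 in *; unfold Rdiv in *.
  all: eapply D_eq; [repeat dstep | ].
  all: cbv beta; cbn [INR Init.Nat.pred]; rewrite ?Rmult_0_l, ?Rplus_0_r in *.
  all: try (apply Rgt_not_eq; pos).
  - assert (R4 : r 4%nat = W 4%nat * / W 2%nat * r 2%nat) by lra.
    rewrite R4. field. lra.
  - assert (R3 : r 3%nat = W 3%nat * / W 1%nat * r 1%nat) by lra.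
    rewrite R3. field. lra.
  - set (lam := W 3%nat * / W 1%nat + a1 * (W 0%nat * / W 1%nat)) in *.
    assert (R3 : r 3%nat = lam * r 1%nat) by lra.
    assert (Hat : a1 * (W 0%nat * / W 1%nat) > 0) by pos.
    assert (K5 : a1 * (W 0%nat * / W 1%nat) * (r 5%nat - W 5%nat * / W 1%nat * r 1%nat) = 0).
    { rewrite R3 in E5. unfold lam in E5. lra. }
    assert (K7 : a1 * (W 0%nat * / W 1%nat) * (r 7%nat - W 7%nat * / W 1%nat * r 1%nat) = 0).
    { rewrite R3 in E7. unfold lam in E7. lra. }
    apply Rmult_integral in K5; destruct K5 as [K5|K5]; [lra|].
    apply Rmult_integral in K7; destruct K7 as [K7|K7]; [lra|].
    assert (R5 : r 5%nat = W 5%nat * / W 1%nat * r 1%nat) by lra.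
    assert (R7 : r 7%nat = W 7%nat * / W 1%nat * r 1%nat) by lra.
    assert (K0 : a1 * (W 0%nat * / W 1%nat) * (a1 * r 0%nat) = 0).
    { rewrite R3, R5, R7 in E3. unfold lam in E3. lra. }
    apply Rmult_integral in K0; destruct K0 as [K0|K0]; [lra|].
    apply Rmult_integral in K0; destruct K0 as [K0|K0]; [lra|].
    rewrite K0, R3. unfold lam. field. lra.
  - set (lam := W 3%nat * / W 1%nat - a1 * (W 0%nat * / W 1%nat)) in *.
    assert (R3 : r 3%nat = lam * r 1%nat) by lra.
    assert (Hat : a1 * (W 0%nat * / W 1%nat) > 0) by pos.
    assert (K5 : a1 * (W 0%nat * / W 1%nat) * (r 5%nat - W 5%nat * / W 1%nat * r 1%nat) = 0).
    { rewrite R3 in E5. unfold lam in E5. lra. }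
    assert (K7 : a1 * (W 0%nat * / W 1%nat) * (r 7%nat - W 7%nat * / W 1%nat * r 1%nat) = 0).
    { rewrite R3 in E7. unfold lam in E7. lra. }
    apply Rmult_integral in K5; destruct K5 as [K5|K5]; [lra|].
    apply Rmult_integral in K7; destruct K7 as [K7|K7]; [lra|].
    assert (R5 : r 5%nat = W 5%nat * / W 1%nat * r 1%nat) by lra.
    assert (R7 : r 7%nat = W 7%nat * / W 1%nat * r 1%nat) by lra.
    assert (K0 : a1 * (W 0%nat * / W 1%nat) * (a1 * r 0%nat) = 0).
    { rewrite R3, R5, R7 in E3. unfold lam in E3. lra. }
    apply Rmult_integral in K0; destruct K0 as [K0|K0]; [lra|].
    apply Rmult_integral in K0; destruct K0 as [K0|K0]; [lra|].
    rewrite K0, R3. unfold lam. field. lra.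
  - set (lam := W 4%nat * / W 2%nat + a2 * ((1 - W 0%nat) * / W 2%nat)) in *.
    assert (R4 : r 4%nat = lam * r 2%nat) by lra.
    assert (Hat : a2 * ((1 - W 0%nat) * / W 2%nat) > 0) by pos.
    assert (K0 : a2 * ((1 - W 0%nat) * / W 2%nat) * r 0%nat = 0).
    { unfold lam in E0. lra. }
    apply Rmult_integral in K0; destruct K0 as [K0|K0]; [lra|].
    rewrite K0, R4. unfold lam. field. lra.
  - set (lam := W 4%nat * / W 2%nat - a2 * ((1 - W 0%nat) * / W 2%nat)) in *.
    assert (R4 : r 4%nat = lam * r 2%nat) by lra.
    assert (Hat : a2 * ((1 - W 0%nat) * / W 2%nat) > 0) by pos.
    assert (K0 : a2 * ((1 - W 0%nat) * / W 2%nat) * r 0%nat = 0).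
    { unfold lam in E0. lra. }
    apply Rmult_integral in K0; destruct K0 as [K0|K0]; [lra|].
    rewrite K0, R4. unfold lam. field. lra.
Qed.


Definition prim (a1 a2 p1t p1s p2t p2s pi1 pi2 : R) (W : nat -> R) (k : nat) :=
  let al := W 0%nat in let m1 := W 1%nat in let m2 := W 2%nat in
  let u1 := W 3%nat / m1 in let u2 := W 4%nat / m2 in
  let t1 := al / m1 in let t2 := (1 - al) / m2 in
  let v := u1 - u2 in let D := v ^ 2 - a1 ^ 2 * t1 ^ 2 in
  match k with
  | 0%nat => (1, v ^ 2 * t1 / (al * D), v * a1 ^ 2 * t1 ^ 2 / (al * D), 0, 0,
              (pi1 - pi2) / ((1 - al) * a2 ^ 2), 0, 0, 0)
  | 1%nat => (0, p1s / a1 ^ 2, 0, 1, 0, 0, 0, 0, 0)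
  | 2%nat => (0, (p1t + a1 ^ 2) / a1 ^ 2, 0, 0, 1, 0, 0, 0, 0)
  | 3%nat => (0, 1, - a1, 0, 0, 0, 0, 0, 0)
  | 4%nat => (0, 1, a1, 0, 0, 0, 0, 0, 0)
  | 5%nat => (0, 0, 0, 0, 0, p2s / a2 ^ 2, 0, 1, 0)
  | 6%nat => (0, 0, 0, 0, 0, (p2t + a2 ^ 2) / a2 ^ 2, 0, 0, 1)
  | 7%nat => (0, 0, 0, 0, 0, 1, - a2, 0, 0)
  | _ => (0, 0, 0, 0, 0, 1, a2, 0, 0)
  end.

Definition evec (a1 a2 p1t p1s p2t p2s pi1 pi2 : R) (W : nat -> R) (k i : nat) : R :=
  let al := W 0%nat in let m1 := W 1%nat in let m2 := W 2%nat in
  let u1 := W 3%nat / m1 in let u2 := W 4%nat / m2 in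
  let s1 := W 5%nat / m1 in let s2 := W 6%nat / m2 in
  let T1 := W 7%nat / m1 in let T2 := W 8%nat / m2 in
  let t1 := al / m1 in let t2 := (1 - al) / m2 in
  let '(da, dt1, du1, ds1, dT1, dt2, du2, ds2, dT2) := prim a1 a2 p1t p1s p2t p2s pi1 pi2 W k in
  let dm1 := da / t1 - al * dt1 / t1 ^ 2 in
  let dm2 := - da / t2 - (1 - al) * dt2 / t2 ^ 2 in
  match i with
  | 0%nat => da | 1%nat => dm1 | 2%nat => dm2
  | 3%nat => u1 * dm1 + m1 * du1 | 4%nat => u2 * dm2 + m2 * du2
  | 5%nat => s1 * dm1 + m1 * ds1 | 6%nat => s2 * dm2 + m2 * ds2
  | 7%nat => T1 * dm1 + m1 * dT1 | _ => T2 * dm2 + m2 * dT2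
  end.

Definition emu (a1 a2 : R) (W : nat -> R) (k : nat) : R :=
  match k with
  | 0%nat => u 2 W | 1%nat => u 1 W | 2%nat => u 1 W
  | 3%nat => u 1 W + a1 * tau 1 W | 4%nat => u 1 W - a1 * tau 1 W
  | 5%nat => u 2 W | 6%nat => u 2 W
  | 7%nat => u 2 W + a2 * tau 2 W | _ => u 2 W - a2 * tau 2 W
  end.

Lemma evec_ok P1 P2 a1 a2 p1t p1s p2t p2s W :
  0 < a1 -> 0 < a2 -> OmegaW W ->
  (u 1 W - u 2 W) ^ 2 - a1 ^ 2 * tau 1 W ^ 2 <> 0 ->
  forall k i, (k < 9)%nat -> (i < 9)%nat ->
  sumR 9 (fun j => (Jx a1 a2 (P1 (TT 1 W) (s 1 W)) (P2 (TT 2 W) (s 2 W)) p1t p1s p2t p2s W i j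
                    + dmat P1 a1 W i j)
                  * evec a1 a2 p1t p1s p2t p2s (pi P1 a1 1 W) (pi P2 a2 2 W) W k j)
  = emu a1 a2 W k * evec a1 a2 p1t p1s p2t p2s (pi P1 a1 1 W) (pi P2 a2 2 W) W k i.
Proof.
  intros ha1 ha2 HW HD k i Hk Hi.
  destruct HW as [[H0 H0'] [H1 [H2 [H7 H8]]]].
  unfold u, tau, rho, arho, alpha in HD; cbn [Nat.eqb Nat.add] in HD.
  assert (HD' : (W 3%nat / W 1%nat - W 4%nat / W 2%nat) ^ 2 - a1 ^ 2 * (W 0%nat / W 1%nat) ^ 2 <> 0).
  { replace (W 0%nat / W 1%nat) with (/ (W 1%nat / W 0%nat)) by (field; lra). exact HD. }
  clear HD.
  assert (HD2 : (W 3%nat * W 2%nat - W 4%nat * W 1%nat) ^ 2 - (a1 * W 0%nat * W 2%nat) ^ 2 <> 0).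
  { intro E. apply HD'.
    replace ((W 3%nat / W 1%nat - W 4%nat / W 2%nat) ^ 2 - a1 ^ 2 * (W 0%nat / W 1%nat) ^ 2) with
      (((W 3%nat * W 2%nat - W 4%nat * W 1%nat) ^ 2 - (a1 * W 0%nat * W 2%nat) ^ 2) / (W 1%nat * W 2%nat) ^ 2)
      by (field; lra).
    rewrite E. field. lra. }
  destruct k as [|[|[|[|[|[|[|[|[|k]]]]]]]]]; try lia;
  destruct i as [|[|[|[|[|[|[|[|[|i]]]]]]]]]; try lia.
  all: cbn [sumR]; cbv [Jx dmat evec prim emu Nat.eqb].
  all: unfold pi, u, s, TT, tau, rho, arho, alpha; cbn [Nat.eqb Nat.add].
  all: try (field; repeat split; try lra; try exact HD'; try exact HD2; try (apply Rgt_not_eq; lra)).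
Qed.

Lemma evec_indep a1 a2 p1t p1s p2t p2s pi1 pi2 W :
  0 < a1 -> 0 < a2 -> OmegaW W ->
  (W 3%nat / W 1%nat - W 4%nat / W 2%nat) ^ 2 - a1 ^ 2 * (W 0%nat / W 1%nat) ^ 2 <> 0 ->
  forall c : nat -> R,
   (forall i, (i < 9)%nat -> sumR 9 (fun k => c k * evec a1 a2 p1t p1s p2t p2s pi1 pi2 W k i) = 0) ->
   forall k, (k < 9)%nat -> c k = 0.
Proof.
  intros ha1 ha2 HW HD c Hc.
  destruct HW as [[H0 H0'] [H1 [H2 [H7 H8]]]].
  assert (E0 := Hc 0%nat ltac:(lia)); assert (E1 := Hc 1%nat ltac:(lia));
  assert (E2 := Hc 2%nat ltac:(lia)); assert (E3 := Hc 3%nat ltac:(lia));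
  assert (E4 := Hc 4%nat ltac:(lia)); assert (E5 := Hc 5%nat ltac:(lia));
  assert (E6 := Hc 6%nat ltac:(lia)); assert (E7 := Hc 7%nat ltac:(lia));
  assert (E8 := Hc 8%nat ltac:(lia)). clear Hc.
  cbn [sumR] in E0, E1, E2, E3, E4, E5, E6, E7, E8.
  cbv [evec prim] in E0, E1, E2, E3, E4, E5, E6, E7, E8.
  assert (HD2 : (W 3%nat * W 2%nat - W 4%nat * W 1%nat) ^ 2 - (a1 * W 0%nat * W 2%nat) ^ 2 <> 0).
  { intro E. apply HD.
    replace ((W 3%nat / W 1%nat - W 4%nat / W 2%nat) ^ 2 - a1 ^ 2 * (W 0%nat / W 1%nat) ^ 2) with
      (((W 3%nat * W 2%nat - W 4%nat * W 1%nat) ^ 2 - (a1 * W 0%nat * W 2%nat) ^ 2) / (W 1%nat * W 2%nat) ^ 2)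
      by (field; lra).
    rewrite E. field. lra. }
  assert (C0 : c 0%nat = 0) by lra.
  rewrite C0 in E1, E2, E3, E4, E5, E6, E7, E8.
  assert (C1 : W 1%nat * c 1%nat = 0).
  { match type of E5 with ?L5 = _ => match type of E1 with ?L1 = _ =>
      replace (W 1%nat * c 1%nat) with (L5 - W 5%nat / W 1%nat * L1) by (field; repeat split; try lra; exact HD2) end end.
    rewrite E5, E1. ring. }
  assert (C2 : W 1%nat * c 2%nat = 0).
  { match type of E7 with ?L5 = _ => match type of E1 with ?L1 = _ =>
      replace (W 1%nat * c 2%nat) with (L5 - W 7%nat / W 1%nat * L1) by (field; repeat split; try lra; exact HD2) end end.
    rewrite E7, E1. ring. }
  assert (C5 : W 2%nat * c 5%nat = 0).
  { match type of E6 with ?L5 = _ => match type of E2 with ?L1 = _ =>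
      replace (W 2%nat * c 5%nat) with (L5 - W 6%nat / W 2%nat * L1) by (field; repeat split; try lra; exact HD2) end end.
    rewrite E6, E2. ring. }
  assert (C6 : W 2%nat * c 6%nat = 0).
  { match type of E8 with ?L5 = _ => match type of E2 with ?L1 = _ =>
      replace (W 2%nat * c 6%nat) with (L5 - W 8%nat / W 2%nat * L1) by (field; repeat split; try lra; exact HD2) end end.
    rewrite E8, E2. ring. }
  apply Rmult_integral in C1; destruct C1 as [C1|C1]; [lra|].
  apply Rmult_integral in C2; destruct C2 as [C2|C2]; [lra|].
  apply Rmult_integral in C5; destruct C5 as [C5|C5]; [lra|].
  apply Rmult_integral in C6; destruct C6 as [C6|C6]; [lra|].
  rewrite C1, C2 in E1, E3. rewrite C5, C6 in E2, E4.
  assert (C34 : W 1%nat * a1 * (c 4%nat - c 3%nat) = 0).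
  { match type of E3 with ?L5 = _ => match type of E1 with ?L1 = _ =>
      replace (W 1%nat * a1 * (c 4%nat - c 3%nat)) with (L5 - W 3%nat / W 1%nat * L1) by (field; repeat split; try lra; exact HD2) end end.
    rewrite E3, E1. ring. }
  assert (C78 : W 2%nat * a2 * (c 8%nat - c 7%nat) = 0).
  { match type of E4 with ?L5 = _ => match type of E2 with ?L1 = _ =>
      replace (W 2%nat * a2 * (c 8%nat - c 7%nat)) with (L5 - W 4%nat / W 2%nat * L1) by (field; repeat split; try lra; exact HD2) end end.
    rewrite E4, E2. ring. }
  assert (C4 : c 4%nat = c 3%nat).
  { apply Rmult_integral in C34; destruct C34 as [C|C]; [|lra].
    apply Rmult_integral in C; destruct C; lra. }
  assert (C8 : c 8%nat = c 7%nat).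
  { apply Rmult_integral in C78; destruct C78 as [C|C]; [|lra].
    apply Rmult_integral in C; destruct C; lra. }
  rewrite C4 in E1. rewrite C8 in E2.
  assert (C3 : c 3%nat * (- 2 * W 1%nat ^ 2 / W 0%nat) = 0).
  { rewrite <- E1. field. lra. }
  assert (C7 : c 7%nat * (- 2 * W 2%nat ^ 2 / (1 - W 0%nat)) = 0).
  { rewrite <- E2. field. lra. }
  assert (c 3%nat = 0).
  { apply Rmult_integral in C3; destruct C3 as [C|C]; auto. exfalso.
    assert (0 < 2 * W 1%nat ^ 2 / W 0%nat) by (apply Rdiv_lt_0_compat; nra). lra. }
  assert (c 7%nat = 0).
  { apply Rmult_integral in C7; destruct C7 as [C|C]; auto. exfalso.
    assert (0 < 2 * W 2%nat ^ 2 / (1 - W 0%nat)) by (apply Rdiv_lt_0_compat; nra). lra. }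
  intros k Hk.
  destruct k as [|[|[|[|[|[|[|[|[|k]]]]]]]]]; try lia; lra.
Qed.



Lemma res_r0 P1 a1 a2 P2v p1t p1s p2t p2s W (A : nat -> nat -> R) (mu : R) (r : nat -> R) :
  0 < a1 -> 0 < a2 -> OmegaW W ->
  (forall i j, (i < 9)%nat -> (j < 9)%nat ->
      A i j = Jx a1 a2 (P1 (TT 1 W) (s 1 W)) P2v p1t p1s p2t p2s W i j + dmat P1 a1 W i j) ->
  (u 1 W - u 2 W) ^ 2 = a1 ^ 2 * tau 1 W ^ 2 ->
  (forall i, (i < 9)%nat -> matvec A r i = mu * r i) -> r 0%nat = 0.
Proof.
  intros ha1 ha2 HW HA HR Hr.
  destruct HW as [[H0 H0'] [H1 [H2 [H7 H8]]]].
  assert (Hrow : forall i, (i < 9)%nat -> sumR 9 (fun j =>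
     (Jx a1 a2 (P1 (TT 1 W) (s 1 W)) P2v p1t p1s p2t p2s W i j + dmat P1 a1 W i j) * r j)
       = mu * r i).
  { intros i Hi. rewrite <- Hr by auto. unfold matvec. apply sumR_ext. intros j Hj.
    rewrite HA; auto. }
  assert (E0 := Hrow 0%nat ltac:(lia)); assert (E1 := Hrow 1%nat ltac:(lia));
  assert (E3 := Hrow 3%nat ltac:(lia));
  assert (E5 := Hrow 5%nat ltac:(lia)); assert (E7 := Hrow 7%nat ltac:(lia)).
  clear Hrow Hr HA.
  cbn [sumR] in E0, E1, E3, E5, E7.
  cbv [Jx dmat Nat.eqb] in E0, E1, E3, E5, E7.
  unfold pi, u, s, TT, tau, rho, arho, alpha in *; cbn [Nat.eqb Nat.add] in *.
  assert (Et1 : / (W 1%nat / W 0%nat) = W 0%nat * / W 1%nat) by (field; lra).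
  rewrite ?Et1 in *; unfold Rdiv in *.
  assert (K : (W 4%nat * / W 2%nat - mu) * r 0%nat = 0) by lra.
  apply Rmult_integral in K; destruct K as [K|K]; [|exact K].
  assert (Hmu : mu = W 4%nat * / W 2%nat) by lra.
  rewrite Hmu in E1, E3, E5, E7.
  set (v := W 4%nat * / W 2%nat - W 3%nat * / W 1%nat) in *.
  assert (Hv : v ^ 2 = a1 ^ 2 * (W 0%nat * / W 1%nat) ^ 2) by (rewrite <- HR; unfold v; ring).
  assert (Hv0 : v <> 0).
  { intro E. rewrite E in Hv. assert (0 < a1 ^ 2 * (W 0%nat * / W 1%nat) ^ 2) by pos. nra. }
  assert (R3 : r 3%nat = W 4%nat * / W 2%nat * r 1%nat) by lra.
  assert (K5 : v * (r 5%nat - W 5%nat * / W 1%nat * r 1%nat) = 0).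
  { rewrite R3 in E5. unfold v. lra. }
  assert (K7 : v * (r 7%nat - W 7%nat * / W 1%nat * r 1%nat) = 0).
  { rewrite R3 in E7. unfold v. lra. }
  apply Rmult_integral in K5; destruct K5 as [K5|K5]; [contradiction|].
  apply Rmult_integral in K7; destruct K7 as [K7|K7]; [contradiction|].
  assert (R5 : r 5%nat = W 5%nat * / W 1%nat * r 1%nat) by lra.
  assert (R7 : r 7%nat = W 7%nat * / W 1%nat * r 1%nat) by lra.
  assert (K0 : a1 ^ 2 * (W 0%nat * / W 1%nat) * r 0%nat = r 1%nat * (a1 ^ 2 * (W 0%nat * / W 1%nat) ^ 2 - v ^ 2)).
  { rewrite R3, R5, R7 in E3. unfold v. lra. }
  rewrite Hv, Rminus_diag, Rmult_0_r in K0.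
  apply Rmult_integral in K0; destruct K0 as [K0|K0]; [|exact K0].
  exfalso. assert (0 < a1 ^ 2 * (W 0%nat * / W 1%nat)) by pos. lra.
Qed.



Ltac side := cbv beta; first [ apply Rgt_not_eq; pos | pos ].
Ltac uq G U := match type of G with derivable_pt_lim ?F ?x0 ?L =>
      let K := fresh "K" in
      revert G; eassert (K : derivable_pt_lim F x0 _) by (repeat dstep; side); intro G;
      pose proof (uniqueness_limite _ _ _ _ G K) as U; clear K G end.
Ltac solveA U A := match type of U with - ?a - ?S = ?G => assert (A : a = - S - G) by lra end.

Lemma energy1 (e1 P1 P2 e1T e1s p1T p1s p2T p2s : R -> R -> R) (a1 a2 : R)
  (W Wt Wx : R -> R -> nat -> R) (t x : R) :
  0 < a1 -> 0 < a2 ->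
  C1data e1 e1T e1s -> C1data P1 p1T p1s -> C1data P2 p2T p2s ->
  (forall i, (i < 9)%nat -> derivable_pt_lim (fun t' => W t' x i) t (Wt t x i)) ->
  (forall i, (i < 9)%nat -> derivable_pt_lim (fun x' => W t x' i) x (Wx t x i)) ->
  OmegaW (W t x) ->
  (forall i, (i < 9)%nat -> derivable_pt_lim (fun x' => gflux P1 P2 a1 a2 (W t x') i) x
          (- Wt t x i - sumR 9 (fun j => dmat P1 a1 (W t x) i j * Wx t x j))) ->
  exists Dt Dx,
          derivable_pt_lim (fun t' => eta e1 P1 a1 1 (W t' x)) t Dt /\
          derivable_pt_lim (fun x' => eflux e1 P1 a1 1 (W t x')) x Dx /\
          Dt + Dx - u 2 (W t x) * pi P1 a1 1 (W t x) * dalpha 1 (Wx t x 0%nat) = 0.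
Proof.
  intros ha1 ha2 Ce1 CP1 CP2 HT HX HW HG.
  pose proof (chain_tau _ _ _ Ce1) as De1.
  pose proof (chain_tau _ _ _ CP1) as DP1.
  pose proof (chain_tau _ _ _ CP2) as DP2.
  destruct HW as [[H0 H0'] [H1 [H2 [H7 H8]]]].
  assert (T0 := HT 0%nat ltac:(lia)); assert (T1 := HT 1%nat ltac:(lia));
  assert (T2 := HT 2%nat ltac:(lia)); assert (T3 := HT 3%nat ltac:(lia));
  assert (T4 := HT 4%nat ltac:(lia)); assert (T5 := HT 5%nat ltac:(lia));
  assert (T6 := HT 6%nat ltac:(lia)); assert (T7 := HT 7%nat ltac:(lia));
  assert (T8 := HT 8%nat ltac:(lia)).
  assert (X0 := HX 0%nat ltac:(lia)); assert (X1 := HX 1%nat ltac:(lia));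
  assert (X2 := HX 2%nat ltac:(lia)); assert (X3 := HX 3%nat ltac:(lia));
  assert (X4 := HX 4%nat ltac:(lia)); assert (X5 := HX 5%nat ltac:(lia));
  assert (X6 := HX 6%nat ltac:(lia)); assert (X7 := HX 7%nat ltac:(lia));
  assert (X8 := HX 8%nat ltac:(lia)).
  assert (G0 := HG 0%nat ltac:(lia)); assert (G1 := HG 1%nat ltac:(lia));
  assert (G3 := HG 3%nat ltac:(lia)); assert (G5 := HG 5%nat ltac:(lia));
  assert (G7 := HG 7%nat ltac:(lia)).
  clear HT HX HG.
  cbn [sumR] in G0, G1, G3, G5, G7. cbv [dmat Nat.eqb] in G0, G1, G3, G5, G7.
  unfold gflux in G0, G1, G3, G5, G7.
  unfold pi, u, s, TT, tau, rho, arho, alpha in G0, G1, G3, G5, G7; cbn [Nat.eqb Nat.add] in G0, G1, G3, G5, G7.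
  uq G0 U0. uq G1 U1. uq G3 U3. uq G5 U5. uq G7 U7.
  cbn [INR Init.Nat.pred] in U0, U1, U3, U5, U7.
  solveA U0 WA0. solveA U1 WA1. solveA U3 WA3. solveA U5 WA5. solveA U7 WA7. clear U0 U1 U3 U5 U7.
  unfold eta, eflux, Energy, dalpha, pi, u, s, TT, tau, rho, arho, alpha; cbn [Nat.eqb Nat.add].
  eexists; eexists; split; [repeat dstep; side | split; [repeat dstep; side | ]].
  cbn [INR Init.Nat.pred]. rewrite WA0, WA1, WA3, WA5, WA7.
  field.
  repeat split; lra.
Qed.

Lemma energy2 (e2 P1 P2 e2T e2s p1T p1s p2T p2s : R -> R -> R) (a1 a2 : R)
  (W Wt Wx : R -> R -> nat -> R) (t x : R) :
  0 < a1 -> 0 < a2 ->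
  C1data e2 e2T e2s -> C1data P1 p1T p1s -> C1data P2 p2T p2s ->
  (forall i, (i < 9)%nat -> derivable_pt_lim (fun t' => W t' x i) t (Wt t x i)) ->
  (forall i, (i < 9)%nat -> derivable_pt_lim (fun x' => W t x' i) x (Wx t x i)) ->
  OmegaW (W t x) ->
  (forall i, (i < 9)%nat -> derivable_pt_lim (fun x' => gflux P1 P2 a1 a2 (W t x') i) x
          (- Wt t x i - sumR 9 (fun j => dmat P1 a1 (W t x) i j * Wx t x j))) ->
  exists Dt Dx,
          derivable_pt_lim (fun t' => eta e2 P2 a2 2 (W t' x)) t Dt /\
          derivable_pt_lim (fun x' => eflux e2 P2 a2 2 (W t x')) x Dx /\
          Dt + Dx - u 2 (W t x) * pi P1 a1 1 (W t x) * dalpha 2 (Wx t x 0%nat) = 0.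
Proof.
  intros ha1 ha2 Ce1 CP1 CP2 HT HX HW HG.
  pose proof (chain_tau _ _ _ Ce1) as De2.
  pose proof (chain_tau _ _ _ CP1) as DP1.
  pose proof (chain_tau _ _ _ CP2) as DP2.
  destruct HW as [[H0 H0'] [H1 [H2 [H7 H8]]]].
  assert (T0 := HT 0%nat ltac:(lia)); assert (T1 := HT 1%nat ltac:(lia));
  assert (T2 := HT 2%nat ltac:(lia)); assert (T3 := HT 3%nat ltac:(lia));
  assert (T4 := HT 4%nat ltac:(lia)); assert (T5 := HT 5%nat ltac:(lia));
  assert (T6 := HT 6%nat ltac:(lia)); assert (T7 := HT 7%nat ltac:(lia));
  assert (T8 := HT 8%nat ltac:(lia)).
  assert (X0 := HX 0%nat ltac:(lia)); assert (X1 := HX 1%nat ltac:(lia));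
  assert (X2 := HX 2%nat ltac:(lia)); assert (X3 := HX 3%nat ltac:(lia));
  assert (X4 := HX 4%nat ltac:(lia)); assert (X5 := HX 5%nat ltac:(lia));
  assert (X6 := HX 6%nat ltac:(lia)); assert (X7 := HX 7%nat ltac:(lia));
  assert (X8 := HX 8%nat ltac:(lia)).
  assert (G0 := HG 0%nat ltac:(lia)); assert (G1 := HG 2%nat ltac:(lia));
  assert (G3 := HG 4%nat ltac:(lia)); assert (G5 := HG 6%nat ltac:(lia));
  assert (G7 := HG 8%nat ltac:(lia)).
  clear HT HX HG.
  cbn [sumR] in G0, G1, G3, G5, G7. cbv [dmat Nat.eqb] in G0, G1, G3, G5, G7.
  unfold gflux in G0, G1, G3, G5, G7.
  unfold pi, u, s, TT, tau, rho, arho, alpha in G0, G1, G3, G5, G7; cbn [Nat.eqb Nat.add] in G0, G1, G3, G5, G7.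
  uq G0 U0. uq G1 U1. uq G3 U3. uq G5 U5. uq G7 U7.
  cbn [INR Init.Nat.pred] in U0, U1, U3, U5, U7.
  solveA U0 WA0. solveA U1 WA1. solveA U3 WA3. solveA U5 WA5. solveA U7 WA7. clear U0 U1 U3 U5 U7.
  unfold eta, eflux, Energy, dalpha, pi, u, s, TT, tau, rho, arho, alpha; cbn [Nat.eqb Nat.add].
  eexists; eexists; split; [repeat dstep; side | split; [repeat dstep; side | ]].
  cbn [INR Init.Nat.pred]. rewrite WA0, WA1, WA3, WA5, WA7.
  field.
  repeat split; lra.
Qed.

Module LinAlg.
From mathcomp Require Import all_boot all_algebra.
From mathcomp Require Import Rstruct.
Import GRing.Theory.
Local Open Scope ring_scope.

Lemma sumR_big n (f : nat -> R) : sumR n f = \sum_(k < n) f k.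
Proof.
  elim: n => [|n IH] /=; first by rewrite big_ord0.
  by rewrite big_ord_recr /= IH.
Qed.

Lemma no_indep (r : nat -> nat -> R) :
  (forall k, lt k 9 -> r k 0%nat = 0) ->
  (forall c : nat -> R, (forall i, lt i 9 -> sumR 9 (fun k => c k * r k i) = 0) ->
      forall k, lt k 9 -> c k = 0) -> False.
Proof.
  move=> H0 Hind.
  pose M : 'M[R]_9 := \matrix_(k, i) r k i.
  have Hfree : row_free M.
  { apply: inj_row_free => v Hv. apply/rowP => k. rewrite mxE.
    have Hs : forall i, lt i 9 -> sumR 9 (fun k => v 0 (inord k) * r k i) = 0.
    { move=> i Hi. rewrite sumR_big.
      transitivity ((v *m M) 0 (inord i)); last by rewrite Hv mxE.
      rewrite mxE. apply: eq_bigr => j _. rewrite inord_val mxE inordK //. exact/ltP. }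
    have := Hind _ Hs k (elimT ltP (ltn_ord k)). by rewrite inord_val. }
  have Hu : M \in unitmx by rewrite -row_free_unit.
  have HMe : M *m (delta_mx 0 0 : 'cV[R]_9) = 0.
  { rewrite -colE. apply/colP => k. rewrite !mxE. exact: H0 _ (elimT ltP (ltn_ord k)). }
  have := mulKmx Hu (delta_mx 0 0 : 'cV[R]_9). rewrite HMe mulmx0 => /(congr1 (fun A : 'cV[R]_9 => A 0 0)).
  rewrite !mxE /=. move/eqP. by rewrite eq_sym oner_eq0.
Qed.
End LinAlg.

Theorem proposition3p3
  (e1 e2 P1 P2 : R -> R -> R) (a1 a2 : R)
  (ha1 : 0 < a1) (ha2 : 0 < a2)
  (he1 : C1_on tau_pos e1) (he2 : C1_on tau_pos e2)
  (hP1 : C1_on tau_pos P1) (hP2 : C1_on tau_pos P2)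
  (hPe1 : forall t s0, 0 < t -> derivable_pt_lim (fun z => e1 z s0) t (- P1 t s0))
  (hPe2 : forall t s0, 0 < t -> derivable_pt_lim (fun z => e2 z s0) t (- P2 t s0)) :
  (forall (W : nat -> R) (J : nat -> nat -> R),
     OmegaW W ->
     is_jacobian (gflux P1 P2 a1 a2) W J ->
     let A := fun i j => J i j + dmat P1 a1 W i j in
     (forall x : R,
        det 9 (fun i j => (if Nat.eqb i j then x else 0) - A i j) =
        (x - u 2 W) ^ 3 * (x - u 1 W) ^ 2
        * (x - (u 1 W + a1 * tau 1 W)) * (x - (u 1 W - a1 * tau 1 W))
        * (x - (u 2 W + a2 * tau 2 W)) * (x - (u 2 W - a2 * tau 2 W))) /\
     (forall (n : nat) (r : nat -> R), (n < 6)%nat ->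
        (forall i, (i < 9)%nat -> matvec A r i = lamfun a1 a2 n W * r i) ->
        derivable_pt_lim (fun h => lamfun a1 a2 n (fun i => W i + h * r i)) 0 0) /\
     (eigenbasis A <->
        (alpha 1 W <> 0 /\ alpha 2 W <> 0 /\ Rabs (u 1 W - u 2 W) <> a1 * tau 1 W)))
  /\
  (forall (U : R -> R -> Prop) (W : R -> R -> nat -> R) (Wt Wx : R -> R -> nat -> R),
     open2 U ->
     (forall i t x, (i < 9)%nat -> U t x ->
        derivable_pt_lim (fun t' => W t' x i) t (Wt t x i) /\
        derivable_pt_lim (fun x' => W t x' i) x (Wx t x i) /\
        cont2_at (fun t0 x0 => Wt t0 x0 i) t x /\
        cont2_at (fun t0 x0 => Wx t0 x0 i) t x) ->
     (forall t x, U t x -> OmegaW (W t x)) ->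
     (forall i t x, (i < 9)%nat -> U t x ->
        derivable_pt_lim (fun x' => gflux P1 P2 a1 a2 (W t x') i) x
          (- Wt t x i - sumR 9 (fun j => dmat P1 a1 (W t x) i j * Wx t x j))) ->
     forall t x, U t x ->
       (exists Dt Dx,
          derivable_pt_lim (fun t' => eta e1 P1 a1 1 (W t' x)) t Dt /\
          derivable_pt_lim (fun x' => eflux e1 P1 a1 1 (W t x')) x Dx /\
          Dt + Dx - u 2 (W t x) * pi P1 a1 1 (W t x) * dalpha 1 (Wx t x 0%nat) = 0) /\
       (exists Dt Dx,
          derivable_pt_lim (fun t' => eta e2 P2 a2 2 (W t' x)) t Dt /\
          derivable_pt_lim (fun x' => eflux e2 P2 a2 2 (W t x')) x Dx /\
          Dt + Dx - u 2 (W t x) * pi P1 a1 1 (W t x) * dalpha 2 (Wx t x 0%nat) = 0) /\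
       (exists Dt Dx,
          derivable_pt_lim (fun t' => eta e1 P1 a1 1 (W t' x) + eta e2 P2 a2 2 (W t' x)) t Dt /\
          derivable_pt_lim (fun x' => eflux e1 P1 a1 1 (W t x') + eflux e2 P2 a2 2 (W t x')) x Dx /\
          Dt + Dx = 0)).
Proof.
  destruct hP1 as [p1t [p1s HC1]]. destruct hP2 as [p2t [p2s HC2]].
  destruct he1 as [e1t [e1s Ce1]]. destruct he2 as [e2t [e2s Ce2]].
  split.
  - intros W J HW HJ A.
    assert (HJx := Jac_eq P1 P2 p1t p1s p2t p2s a1 a2 W J HC1 HC2 HW HJ).
    assert (HA : forall i j, (i < 9)%nat -> (j < 9)%nat ->
      A i j = Jx a1 a2 (P1 (TT 1 W) (s 1 W)) (P2 (TT 2 W) (s 2 W))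
     (p1t (TT 1 W) (s 1 W)) (p1s (TT 1 W) (s 1 W)) (p2t (TT 2 W) (s 2 W)) (p2s (TT 2 W) (s 2 W)) W i j
        + dmat P1 a1 W i j).
    { intros i j Hi Hj. unfold A. rewrite HJx; auto. }
    clearbody A.
    assert (Hpos := HW). destruct Hpos as [[H0 H0'] [H1 [H2 [H7 H8]]]].
    assert (Ht1 : tau 1 W = W 0%nat / W 1%nat).
    { unfold tau, rho, arho, alpha; cbn [Nat.eqb]. field. lra. }
    split; [|split].
    + intros x. eapply charpoly; eauto.
    + intros n r Hn Hr. eapply LD; eauto.
    + split.
      * intros [r [mu [Hev Hind]]].
        split; [unfold alpha; cbn [Nat.eqb]; lra|].
        split; [unfold alpha; cbn [Nat.eqb]; lra|].
        intro HR. apply (LinAlg.no_indep r); auto.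
        intros k Hk. eapply (res_r0 P1 a1 a2 _ _ _ _ _ W A (mu k) (r k)); eauto.
        replace (a1 ^ 2 * tau 1 W ^ 2) with ((a1 * tau 1 W) ^ 2) by ring.
        rewrite <- HR, pow2_abs. reflexivity.
        all: try (intros i Hi; apply Hev; auto).
      * intros [_ [_ HNR]].
        assert (HD : (u 1 W - u 2 W) ^ 2 - a1 ^ 2 * tau 1 W ^ 2 <> 0).
        { intro E. apply HNR.
          assert (Hta : 0 < a1 * tau 1 W) by (rewrite Ht1; apply Rmult_lt_0_compat; [lra|apply Rdiv_lt_0_compat; lra]).
          assert (E2 : (Rabs (u 1 W - u 2 W) - a1 * tau 1 W) * (Rabs (u 1 W - u 2 W) + a1 * tau 1 W) = 0).
          { transitivity ((u 1 W - u 2 W) ^ 2 - a1 ^ 2 * tau 1 W ^ 2); [|exact E].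
            rewrite <- (pow2_abs (u 1 W - u 2 W)). ring. }
          apply Rmult_integral in E2. destruct E2 as [E2|E2]; [lra|].
          pose proof (Rabs_pos (u 1 W - u 2 W)). lra. }
        exists (evec a1 a2 (p1t (TT 1 W) (s 1 W)) (p1s (TT 1 W) (s 1 W)) (p2t (TT 2 W) (s 2 W)) (p2s (TT 2 W) (s 2 W))
                  (pi P1 a1 1 W) (pi P2 a2 2 W) W).
        exists (emu a1 a2 W).
        split.
        -- intros k i Hk Hi. unfold matvec.
           rewrite (sumR_ext 9 _ (fun j => (Jx a1 a2 (P1 (TT 1 W) (s 1 W)) (P2 (TT 2 W) (s 2 W))
             (p1t (TT 1 W) (s 1 W)) (p1s (TT 1 W) (s 1 W)) (p2t (TT 2 W) (s 2 W)) (p2s (TT 2 W) (s 2 W)) W i j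
              + dmat P1 a1 W i j) * evec a1 a2 (p1t (TT 1 W) (s 1 W)) (p1s (TT 1 W) (s 1 W)) (p2t (TT 2 W) (s 2 W)) (p2s (TT 2 W) (s 2 W))
                  (pi P1 a1 1 W) (pi P2 a2 2 W) W k j)).
           2:{ intros j Hj. rewrite HA; auto. }
           apply evec_ok; auto.
        -- apply evec_indep; auto.
           rewrite Ht1 in HD. unfold u, arho in HD; cbn [Nat.add] in HD. exact HD.
  - intros U W Wt Wx HU HC HOm HPDE t x Htx.
    assert (HT : forall i, (i < 9)%nat -> derivable_pt_lim (fun t' => W t' x i) t (Wt t x i))
      by (intros i Hi; apply (HC i t x Hi Htx)).
    assert (HX : forall i, (i < 9)%nat -> derivable_pt_lim (fun x' => W t x' i) x (Wx t x i))
      by (intros i Hi; apply (HC i t x Hi Htx)).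
    assert (HG : forall i, (i < 9)%nat -> derivable_pt_lim (fun x' => gflux P1 P2 a1 a2 (W t x') i) x
          (- Wt t x i - sumR 9 (fun j => dmat P1 a1 (W t x) i j * Wx t x j)))
      by (intros i Hi; apply (HPDE i t x Hi Htx)).
    destruct (energy1 e1 P1 P2 e1t e1s p1t p1s p2t p2s a1 a2 W Wt Wx t x ha1 ha2 Ce1 HC1 HC2 HT HX (HOm t x Htx) HG)
      as [Dt1 [Dx1 [A1 [B1 C1]]]].
    destruct (energy2 e2 P1 P2 e2t e2s p1t p1s p2t p2s a1 a2 W Wt Wx t x ha1 ha2 Ce2 HC1 HC2 HT HX (HOm t x Htx) HG)
      as [Dt2 [Dx2 [A2 [B2 C2]]]].
    split; [exists Dt1, Dx1; auto|].
    split; [exists Dt2, Dx2; auto|].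
    exists (Dt1 + Dt2), (Dx1 + Dx2). split; [|split].
    + apply (D_plus (fun t' => eta e1 P1 a1 1 (W t' x)) (fun t' => eta e2 P2 a2 2 (W t' x))); auto.
    + apply (D_plus (fun x' => eflux e1 P1 a1 1 (W t x')) (fun x' => eflux e2 P2 a2 2 (W t x'))); auto.
    + unfold dalpha in C1, C2; cbn [Nat.eqb] in C1, C2. lra.
Qed.
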